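(* On a translating soliton $f:M^2\to\mathbb{R}^3$ the Gauss curvature $K$ satisfies $$K=\Delta\log\sqrt{1+H^2}-\frac{2}{(1+H^2)^2}|\nabla H|^2+\frac{H^4}{1+H^2}=\frac{H}{1+H^2}\Delta H-\frac{|\nabla H|^2}{1+H^2}+\frac{H^4}{1+H^2}.$$ Moreover, at each point where $H>0$, $$K=\frac{H^2}{1+H^2}\Delta\log(e^uH)=\frac{H^2}{1+H^2}\big(\Delta\log H+H^2\big),$$ where $u=\langle f,\operatorname{v}\rangle$.
   Context: A translating soliton is an immersion $f:M^2\to\mathbb{R}^3$ of an oriented surface with unit normal $\xi$ whose scalar mean curvature $H$ (trace of $A(v,w)=-\langle\vec A(v,w),\xi\rangle$, $\vec A$ the second fundamental form) satisfies $H=-\langle\operatorname{v},\xi\rangle$ with $\operatorname{v}=\operatorname{e}_3$. $\nabla$ and $\Delta$ are the gradient and Laplacian of the induced metric, and $K$ its Gauss curvature. *)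

(* Defs.v *)
From Stdlib Require Import Reals Lra List ClassicalEpsilon.
Open Scope R_scope.

(* Dx F x y = d/dt F(t,y) at t = x (chosen by epsilon; it is the derivative
   whenever the latter exists). *)
Definition Dx (F : R -> R -> R) (x y : R) : R :=
  epsilon (inhabits 0) (fun l => derivable_pt_lim (fun t => F t y) x l).
Definition Dy (F : R -> R -> R) (x y : R) : R :=
  epsilon (inhabits 0) (fun l => derivable_pt_lim (fun t => F x t) y l).
Definition Dp (i : nat) (F : R -> R -> R) : R -> R -> R :=
  match i with O => Dx F | _ => Dy F end.
Fixpoint iterD (w : list nat) (F : R -> R -> R) : R -> R -> R :=
  match w with nil => F | i :: w' => Dp i (iterD w' F) end.

Definition cont2_at (F : R -> R -> R) (x y : R) : Prop :=
  forall eps, 0 < eps -> exists d, 0 < d /\ forall x' y',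
    Rabs (x' - x) < d -> Rabs (y' - y) < d -> Rabs (F x' y' - F x y) < eps.

Definition open2 (U : R -> R -> Prop) : Prop :=
  forall x y, U x y -> exists d, 0 < d /\ forall x' y',
    Rabs (x' - x) < d -> Rabs (y' - y) < d -> U x' y'.

Definition smooth_on (U : R -> R -> Prop) (F : R -> R -> R) : Prop :=
  forall (w : list nat) x y, U x y ->
    cont2_at (iterD w F) x y /\
    (exists l, derivable_pt_lim (fun t => iterD w F t y) x l) /\
    (exists l, derivable_pt_lim (fun t => iterD w F x t) y l).

Definition dot3 (a b : nat -> R) : R := a 0%nat * b 0%nat + a 1%nat * b 1%nat + a 2%nat * b 2%nat.
Definition cross3 (a b : nat -> R) : nat -> R := fun k =>
  match k with
  | O => a 1%nat * b 2%nat - a 2%nat * b 1%nat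
  | 1%nat => a 2%nat * b 0%nat - a 0%nat * b 2%nat
  | _ => a 0%nat * b 1%nat - a 1%nat * b 0%nat
  end.
Definition sum2 (F : nat -> R) : R := F 0%nat + F 1%nat.

(* A local parametrization f : U ⊆ R^2 -> R^3, f k x y = k-th component. *)
Definition Surf := nat -> R -> R -> R.
Definition vat (f : Surf) (x y : R) : nat -> R := fun k => f k x y.
Definition fd (i : nat) (f : Surf) : Surf := fun k => Dp i (f k).
Definition fdd (i j : nat) (f : Surf) : Surf := fun k => Dp i (Dp j (f k)).

Definition metric (f : Surf) (i j : nat) (x y : R) : R :=
  dot3 (vat (fd i f) x y) (vat (fd j f) x y).
Definition detg (f : Surf) (x y : R) : R :=
  metric f 0 0 x y * metric f 1 1 x y - metric f 0 1 x y * metric f 1 0 x y.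
Definition ginv (f : Surf) (i j : nat) (x y : R) : R :=
  match i, j with
  | O, O => metric f 1 1 x y / detg f x y
  | S _, S _ => metric f 0 0 x y / detg f x y
  | _, _ => - metric f 0 1 x y / detg f x y
  end.

(* unit normal xi = sigma * (f_x × f_y)/|f_x × f_y|, sigma = ±1 fixes the orientation *)
Definition normal (sigma : R) (f : Surf) (x y : R) : nat -> R := fun k =>
  sigma * cross3 (vat (fd 0 f) x y) (vat (fd 1 f) x y) k /
  sqrt (dot3 (cross3 (vat (fd 0 f) x y) (vat (fd 1 f) x y))
             (cross3 (vat (fd 0 f) x y) (vat (fd 1 f) x y))).

(* scalar second fundamental form A_ij = -<vec A(f_i,f_j), xi> = -<f_ij, xi> *)
Definition sff (sigma : R) (f : Surf) (i j : nat) (x y : R) : R :=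
  - dot3 (vat (fdd i j f) x y) (normal sigma f x y).
Definition meanH (sigma : R) (f : Surf) (x y : R) : R :=
  sum2 (fun i => sum2 (fun j => ginv f i j x y * sff sigma f i j x y)).

Definition christ (f : Surf) (k i j : nat) (x y : R) : R :=
  / 2 * sum2 (fun l => ginv f k l x y *
     (Dp i (metric f j l) x y + Dp j (metric f i l) x y - Dp l (metric f i j) x y)).
(* R(d_i,d_j)d_k = Riem l i j k d_l,  R(X,Y)Z = ∇_X∇_Y Z - ∇_Y∇_X Z - ∇_[X,Y] Z *)
Definition Riem (f : Surf) (l i j k : nat) (x y : R) : R :=
  Dp i (christ f l j k) x y - Dp j (christ f l i k) x y +
  sum2 (fun m => christ f m j k x y * christ f l i m x y
                 - christ f m i k x y * christ f l j m x y).
Definition gaussK (f : Surf) (x y : R) : R :=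
  sum2 (fun l => metric f 0 l x y * Riem f l 0 1 1 x y) / detg f x y.

Definition laplacian (f : Surf) (phi : R -> R -> R) (x y : R) : R :=
  / sqrt (detg f x y) *
  sum2 (fun i => sum2 (fun j =>
    Dp i (fun a b => sqrt (detg f a b) * ginv f i j a b * Dp j phi a b) x y)).
Definition gradsq (f : Surf) (phi : R -> R -> R) (x y : R) : R :=
  sum2 (fun i => sum2 (fun j => ginv f i j x y * Dp i phi x y * Dp j phi x y)).

Definition immersion_on (U : R -> R -> Prop) (f : Surf) : Prop :=
  forall x y, U x y ->
    dot3 (cross3 (vat (fd 0 f) x y) (vat (fd 1 f) x y))
         (cross3 (vat (fd 0 f) x y) (vat (fd 1 f) x y)) <> 0.

(* translating soliton with velocity v = e_3 : H = -<e_3, xi> *)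
Definition translating_soliton (U : R -> R -> Prop) (sigma : R) (f : Surf) : Prop :=
  forall x y, U x y -> meanH sigma f x y = - normal sigma f x y 2%nat.

(* Main.v *)
Require Import Defs.
From Stdlib Require Import Reals.
From Stdlib Require Import Lra Lia List ClassicalEpsilon FunctionalExtensionality PropExtensionality.
From Coquelicot Require Derive Derive_2d Hierarchy Continuity.
Open Scope R_scope.

Definition Der (i:nat) (F:R->R->R) (x y l:R) : Prop :=
  match i with O => derivable_pt_lim (fun t => F t y) x l
             | _ => derivable_pt_lim (fun t => F x t) y l end.
Definition Dable i F x y := exists l, Der i F x y l.

Lemma Dp_val i F x y l : Der i F x y l -> Dp i F x y = l.
Proof.
  intro H. destruct i; simpl in *; unfold Defs.Dx, Defs.Dy.
  - assert (E: exists l, derivable_pt_lim (fun t => F t y) x l) by eauto.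
    pose proof (epsilon_spec (inhabits 0) _ E) as S.
    eapply uniqueness_limite; eauto.
  - assert (E: exists l, derivable_pt_lim (fun t => F x t) y l) by eauto.
    pose proof (epsilon_spec (inhabits 0) _ E) as S.
    eapply uniqueness_limite; eauto.
Qed.

Lemma Der_Dp i F x y : Dable i F x y -> Der i F x y (Dp i F x y).
Proof. intros [l H]. rewrite (Dp_val _ _ _ _ _ H). exact H. Qed.

Lemma Der_const i c x y : Der i (fun _ _ => c) x y 0.
Proof. destruct i; simpl; apply derivable_pt_lim_const. Qed.

Lemma Der_plus i F G x y l1 l2 : Der i F x y l1 -> Der i G x y l2 ->
  Der i (fun a b => F a b + G a b) x y (l1 + l2).
Proof. destruct i; simpl; intros; apply (derivable_pt_lim_plus _ _ _ _ _ H H0). Qed.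

Lemma Der_minus i F G x y l1 l2 : Der i F x y l1 -> Der i G x y l2 ->
  Der i (fun a b => F a b - G a b) x y (l1 - l2).
Proof. destruct i; simpl; intros; apply (derivable_pt_lim_minus _ _ _ _ _ H H0). Qed.

Lemma Der_opp i F x y l1 : Der i F x y l1 ->
  Der i (fun a b => - F a b) x y (- l1).
Proof. destruct i; simpl; intros; apply (derivable_pt_lim_opp _ _ _ H). Qed.

Lemma Der_mult i F G x y l1 l2 : Der i F x y l1 -> Der i G x y l2 ->
  Der i (fun a b => F a b * G a b) x y (l1 * G x y + F x y * l2).
Proof. destruct i; simpl; intros; apply (derivable_pt_lim_mult _ _ _ _ _ H H0). Qed.


Lemma dpl_loc (f g : R -> R) x l :
  (exists d, 0 < d /\ forall t, Rabs (t - x) < d -> f t = g t) ->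
  derivable_pt_lim f x l -> derivable_pt_lim g x l.
Proof.
  intros [d [Hd E]] H eps He. destruct (H eps He) as [del Hdel].
  assert (Hm: 0 < Rmin del d) by (apply Rmin_pos; [apply cond_pos|lra]).
  exists (mkposreal _ Hm). intros h Hh Hl. simpl in Hl.
  assert (E1: f (x+h) = g (x+h)).
  { apply E. replace (x+h-x) with h by ring. eapply Rlt_le_trans; [exact Hl|apply Rmin_r]. }
  assert (E2: f x = g x).
  { apply E. unfold Rminus; rewrite Rplus_opp_r, Rabs_R0; lra. }
  rewrite <- E1, <- E2. apply Hdel; auto. eapply Rlt_le_trans; [exact Hl|apply Rmin_l].
Qed.

Lemma dpl_ext (f g : R -> R) x l :
  (forall t, f t = g t) -> derivable_pt_lim f x l -> derivable_pt_lim g x l.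
Proof. intros E; apply dpl_loc. exists 1; split; [lra|auto]. Qed.

Lemma Der_inv i F x y l1 : F x y <> 0 -> Der i F x y l1 ->
  Der i (fun a b => / F a b) x y (- l1 / (F x y)^2).
Proof.
  destruct i; simpl; intros Hn H.
  - pose proof (derivable_pt_lim_div (fun _ => 1) (fun t => F t y) x 0 l1
      (derivable_pt_lim_const 1 x) H Hn) as D.
    replace (- l1 / (F x y * (F x y * 1))) with ((0 * F x y - l1 * 1) / (F x y)²)
      by (unfold Rsqr; field; auto).
    eapply dpl_ext; [|exact D]. intro t; unfold div_fct; simpl; unfold Rdiv; ring.
  - pose proof (derivable_pt_lim_div (fun _ => 1) (fun t => F x t) y 0 l1
      (derivable_pt_lim_const 1 y) H Hn) as D.
    replace (- l1 / (F x y * (F x y * 1))) with ((0 * F x y - l1 * 1) / (F x y)²)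
      by (unfold Rsqr; field; auto).
    eapply dpl_ext; [|exact D]. intro t; unfold div_fct; simpl; unfold Rdiv; ring.
Qed.

Lemma Der_div i F G x y l1 l2 : G x y <> 0 -> Der i F x y l1 -> Der i G x y l2 ->
  Der i (fun a b => F a b / G a b) x y (l1 * / G x y + F x y * (- l2 / (G x y)^2)).
Proof.
  intros Hn H1 H2. unfold Rdiv at 1. apply (Der_mult i F (fun a b => / G a b)); auto.
  apply Der_inv; auto.
Qed.

Lemma Der_comp1 i F x y l1 (phi : R -> R) d :
  derivable_pt_lim phi (F x y) d -> Der i F x y l1 ->
  Der i (fun a b => phi (F a b)) x y (d * l1).
Proof.
  destruct i; simpl; intros Hp H.
  - exact (derivable_pt_lim_comp (fun t => F t y) phi x l1 d H Hp).
  - exact (derivable_pt_lim_comp (fun t => F x t) phi y l1 d H Hp).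
Qed.

Lemma Der_sqrt i F x y l1 : 0 < F x y -> Der i F x y l1 ->
  Der i (fun a b => sqrt (F a b)) x y (sqrt (F x y) * / (2 * F x y) * l1).
Proof.
  intros. replace (sqrt (F x y) * / (2 * F x y)) with (/ (2 * sqrt (F x y))).
  apply Der_comp1; auto; apply derivable_pt_lim_sqrt; auto.
  assert (0 < sqrt (F x y)) by (apply sqrt_lt_R0; auto).
  replace (2 * F x y) with (2 * (sqrt (F x y) * sqrt (F x y))) by (rewrite sqrt_sqrt; lra).
  field. lra.
Qed.

Lemma Der_ln i F x y l1 : 0 < F x y -> Der i F x y l1 ->
  Der i (fun a b => ln (F a b)) x y (/ F x y * l1).
Proof. intros; apply Der_comp1; auto; apply derivable_pt_lim_ln; auto. Qed.

Lemma Der_exp i F x y l1 : Der i F x y l1 ->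
  Der i (fun a b => exp (F a b)) x y (exp (F x y) * l1).
Proof. intros; apply Der_comp1; auto; apply derivable_pt_lim_exp. Qed.

Lemma Der_pow2 i F x y l1 : Der i F x y l1 ->
  Der i (fun a b => F a b ^ 2) x y (2 * F x y * l1).
Proof.
  intros H. pose proof (Der_mult i F F x y l1 l1 H H) as D.
  replace (2 * F x y * l1) with (l1 * F x y + F x y * l1) by ring.
  destruct i; simpl in *; eapply dpl_ext; try exact D; intro t; simpl; ring.
Qed.

Definition nbhd (x y : R) (P : R -> R -> Prop) :=
  exists d, 0 < d /\ forall x' y', Rabs (x' - x) < d -> Rabs (y' - y) < d -> P x' y'.

Lemma Der_loc i F G x y l : nbhd x y (fun a b => F a b = G a b) ->
  Der i F x y l -> Der i G x y l.
Proof.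
  intros [d [Hd E]]. destruct i; simpl; apply dpl_loc; exists d; split; auto;
  intros; apply E; auto; unfold Rminus; rewrite Rplus_opp_r, Rabs_R0; lra.
Qed.

Lemma Dp_loc i F G x y : nbhd x y (fun a b => F a b = G a b) ->
  Dp i F x y = Dp i G x y.
Proof.
  intros N.
  assert (N': nbhd x y (fun a b => G a b = F a b)).
  { destruct N as [d [Hd E]]; exists d; split; auto; intros; symmetry; auto. }
  destruct i; simpl; unfold Defs.Dx, Defs.Dy; f_equal; apply functional_extensionality;
  intro l; apply propositional_extensionality; split; intro H.
  - exact (Der_loc 0 F G x y l N H).
  - exact (Der_loc 0 G F x y l N' H).
  - exact (Der_loc 1 F G x y l N H).
  - exact (Der_loc 1 G F x y l N' H).
Qed.

Lemma iterD_app w i F : iterD (w ++ i :: nil) F = iterD w (Dp i F).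
Proof. induction w; simpl; auto. rewrite IHw; auto. Qed.

Lemma smooth_Dp U F i : smooth_on U F -> smooth_on U (Dp i F).
Proof. intros H w x y Hu. rewrite <- iterD_app. apply H; auto. Qed.

Lemma smooth_Dable U F i x y : smooth_on U F -> U x y -> Dable i F x y.
Proof.
  intros H Hu. destruct (H nil x y Hu) as [_ [[l1 H1] [l2 H2]]].
  destruct i; [exists l1|exists l2]; simpl; auto.
Qed.

Lemma smooth_cont U F x y : smooth_on U F -> U x y -> cont2_at F x y.
Proof. intros H Hu. exact (proj1 (H nil x y Hu)). Qed.

Lemma open_nbhd U x y : open2 U -> U x y -> nbhd x y U.
Proof. intros H Hu. destruct (H x y Hu) as [d [Hd E]]. exists d; auto. Qed.

Lemma Derive_x U F u v : smooth_on U F -> U u v ->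
  Derive.Derive (fun t => F t v) u = Dp 0 F u v.
Proof.
  intros H Hu. apply Derive.is_derive_unique. apply Derive.is_derive_Reals.
  exact (Der_Dp 0 F u v (smooth_Dable U F 0 u v H Hu)).
Qed.
Lemma Derive_y U F u v : smooth_on U F -> U u v ->
  Derive.Derive (fun t => F u t) v = Dp 1 F u v.
Proof.
  intros H Hu. apply Derive.is_derive_unique. apply Derive.is_derive_Reals.
  exact (Der_Dp 1 F u v (smooth_Dable U F 1 u v H Hu)).
Qed.

Lemma rabs0 x : Rabs (x - x) = 0.
Proof. unfold Rminus; rewrite Rplus_opp_r; apply Rabs_R0. Qed.

Lemma Schwarz2 U F x y : open2 U -> smooth_on U F -> U x y ->
  Dp 0 (Dp 1 F) x y = Dp 1 (Dp 0 F) x y.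
Proof.
  intros HU HF Hu.
  assert (M1: forall u v, U u v ->
     derivable_pt_lim (fun z : R => Derive.Derive (fun t => F z t) v) u (Dp 0 (Dp 1 F) u v)).
  { intros u v Huv.
    pose proof (Der_Dp 0 (Dp 1 F) u v (smooth_Dable U _ 0 u v (smooth_Dp U F 1 HF) Huv)) as D.
    simpl in D. apply (dpl_loc (fun t => Dp 1 F t v)); auto.
    destruct (HU u v Huv) as [d [Hd E]]. exists d; split; auto. intros t Ht.
    symmetry. apply (Derive_y U); auto. apply E; auto. rewrite rabs0; lra. }
  assert (M2: forall u v, U u v ->
     derivable_pt_lim (fun z : R => Derive.Derive (fun t => F t z) u) v (Dp 1 (Dp 0 F) u v)).
  { intros u v Huv.
    pose proof (Der_Dp 1 (Dp 0 F) u v (smooth_Dable U _ 1 u v (smooth_Dp U F 0 HF) Huv)) as D.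
    simpl in D. apply (dpl_loc (fun t => Dp 0 F u t)); auto.
    destruct (HU u v Huv) as [d [Hd E]]. exists d; split; auto. intros t Ht.
    symmetry. apply (Derive_x U); auto. apply E; auto. rewrite rabs0; lra. }
  destruct (HU x y Hu) as [d [Hd E]].
  assert (Hs : forall (G : R -> R -> R) w, (forall u v, U u v -> G u v = iterD w F u v) ->
     Continuity.continuity_2d_pt G x y).
  { intros G w EG eps.
    destruct (proj1 (HF w x y Hu) eps (cond_pos eps)) as [d2 [Hd2 C]].
    assert (Hm: 0 < Rmin d d2) by (apply Rmin_pos; lra).
    exists (mkposreal _ Hm). intros u v H1 H2; simpl in *.
    rewrite !EG; auto.
    - apply C; eapply Rlt_le_trans; eauto; apply Rmin_r.
    - apply E; eapply Rlt_le_trans; eauto; apply Rmin_l. }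
  pose proof (Derive_2d.Schwarz F x y) as S.
  rewrite (Derive.is_derive_unique _ _ _ (proj2 (Derive.is_derive_Reals _ _ _) (M1 x y Hu))) in S.
  rewrite (Derive.is_derive_unique _ _ _ (proj2 (Derive.is_derive_Reals _ _ _) (M2 x y Hu))) in S.
  apply S.
  - exists (mkposreal d Hd). intros u v H1 H2. simpl in *.
    assert (Huv: U u v) by auto.
    repeat split.
    + eexists; apply Derive.is_derive_Reals; exact (Der_Dp 0 F u v (smooth_Dable U F 0 u v HF Huv)).
    + eexists; apply Derive.is_derive_Reals; exact (Der_Dp 1 F u v (smooth_Dable U F 1 u v HF Huv)).
    + eexists; apply Derive.is_derive_Reals; apply M1; auto.
    + eexists; apply Derive.is_derive_Reals; apply M2; auto.
  - apply (Hs _ (0::1::nil)%nat). intros u v Huv. apply Derive.is_derive_unique. apply Derive.is_derive_Reals; apply M1; auto.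
  - apply (Hs _ (1::0::nil)%nat). intros u v Huv. apply Derive.is_derive_unique. apply Derive.is_derive_Reals; apply M2; auto.
Qed.

Definition Hyp (U : R -> R -> Prop) (f : Surf) :=
  open2 U /\ forall k, (k < 3)%nat -> smooth_on U (f k).

Lemma dab0 U f i c x y : Hyp U f -> U x y -> (c < 3)%nat -> Dable i (f c) x y.
Proof. intros [_ H] Hu Hc. apply (smooth_Dable U); auto. Qed.
Lemma dab1 U f i j c x y : Hyp U f -> U x y -> (c < 3)%nat -> Dable i (Dp j (f c)) x y.
Proof. intros [_ H] Hu Hc. apply (smooth_Dable U); auto. apply smooth_Dp; auto. Qed.
Lemma dab2 U f i j k c x y : Hyp U f -> U x y -> (c < 3)%nat -> Dable i (Dp j (Dp k (f c))) x y.
Proof. intros [_ H] Hu Hc. apply (smooth_Dable U); auto. do 2 apply smooth_Dp; auto. Qed.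

Ltac solve_dable := first
  [ eassumption
  | solve [eapply dab0; eauto; lia]
  | solve [eapply dab1; eauto; lia]
  | solve [eapply dab2; eauto; lia] ].

Ltac dr := lazymatch goal with
 | |- Der _ (fun a b => @?F a b - @?G a b) _ _ _ => eapply (Der_minus _ F G); dr
 | |- Der _ (fun a b => @?F a b + @?G a b) _ _ _ => eapply (Der_plus _ F G); dr
 | |- Der _ (fun a b => - @?F a b) _ _ _ => eapply (Der_opp _ F); dr
 | |- Der _ (fun a b => @?F a b * @?G a b) _ _ _ => eapply (Der_mult _ F G); dr
 | |- Der _ (fun a b => @?F a b / @?G a b) _ _ _ => eapply (Der_div _ F G); [ | dr | dr]
 | |- Der _ (fun a b => / @?F a b) _ _ _ => eapply (Der_inv _ F); [ | dr]
 | |- Der _ (fun a b => sqrt (@?F a b)) _ _ _ => eapply (Der_sqrt _ F); [ | dr]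
 | |- Der _ (fun a b => ln (@?F a b)) _ _ _ => eapply (Der_ln _ F); [ | dr]
 | |- Der _ (fun a b => exp (@?F a b)) _ _ _ => eapply (Der_exp _ F); dr
 | |- Der _ (fun a b => @?F a b ^ 2) _ _ _ => eapply (Der_pow2 _ F); dr
 | |- Der _ (fun a b => ?F a b) _ _ _ => apply (Der_Dp _ F); solve_dable
 | |- Der _ ?F _ _ _ => first [apply Der_const | apply (Der_Dp _ F); solve_dable]
 end.

Definition P (f : Surf) (m i j : nat) (a b : R) : R :=
  dot3 (vat (fdd i j f) a b) (vat (fd m f) a b).

Lemma D_metric U f i j k x y : Hyp U f -> U x y ->
  Dp k (metric f i j) x y = P f j k i x y + P f i k j x y.
Proof.
  intros H Hu. unfold metric, dot3, vat, fd.
  erewrite Dp_val; [|dr].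
  unfold P, dot3, vat, fd, fdd. ring.
Qed.

Arguments Dp : simpl never.

Ltac dab_more := fail.
Lemma metric_sym f i j : metric f i j = metric f j i.
Proof. apply functional_extensionality; intro a; apply functional_extensionality; intro b.
  unfold metric, dot3; ring. Qed.

Lemma dab_metric U f k i j x y : Hyp U f -> U x y -> Dable k (metric f i j) x y.
Proof. intros H Hu. eexists. unfold metric, dot3, vat, fd. dr. Qed.

Definition nn (f : Surf) (a b : R) :=
  dot3 (cross3 (vat (fd 0 f) a b) (vat (fd 1 f) a b)) (cross3 (vat (fd 0 f) a b) (vat (fd 1 f) a b)).

Lemma detg_nn f a b : detg f a b = nn f a b.
Proof. unfold detg, nn, metric, dot3, cross3, vat, fd. ring. Qed.

Lemma detg_pos U f a b : immersion_on U f -> U a b -> 0 < detg f a b.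
Proof.
  intros Hi Hu. rewrite detg_nn. pose proof (Hi a b Hu) as Hn. fold (nn f a b) in Hn.
  assert (0 <= nn f a b).
  { unfold nn, dot3. set (c := cross3 _ _). pose proof (Rle_0_sqr (c 0%nat)).
    pose proof (Rle_0_sqr (c 1%nat)). pose proof (Rle_0_sqr (c 2%nat)). unfold Rsqr in *. lra. }
  lra.
Qed.

Lemma P_sym U f m x y : Hyp U f -> U x y -> P f m 1 0 x y = P f m 0 1 x y.
Proof.
  intros [HU Hs] Hu. unfold P, dot3, vat, fdd, fd.
  rewrite !(Schwarz2 U (f _) x y) by (auto; apply Hs; lia). reflexivity.
Qed.

Lemma Dmetric_loc U f i j k x y : Hyp U f -> U x y ->
  nbhd x y (fun a b => Dp k (metric f i j) a b = (fun a b => P f j k i a b + P f i k j a b) a b).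
Proof.
  intros H Hu. destruct (proj1 H x y Hu) as [d [Hd E]]. exists d; split; auto.
  intros; apply (D_metric U); auto.
Qed.

Lemma dab_Dmetric U f l k i j x y : Hyp U f -> U x y -> Dable l (Dp k (metric f i j)) x y.
Proof.
  intros H Hu. eexists. apply (Der_loc _ (fun a b => P f j k i a b + P f i k j a b)).
  2:{ unfold P, dot3, vat, fd, fdd. dr. }
  destruct (Dmetric_loc U f i j k x y H Hu) as [d [Hd E]]. exists d; split; auto.
  intros; symmetry; apply E; auto.
Qed.

Ltac solve_dable ::= first
  [ eassumption
  | solve [eapply dab0; eauto; lia]
  | solve [eapply dab1; eauto; lia]
  | solve [eapply dab2; eauto; lia]
  | solve [eapply dab_metric; eauto]
  | solve [eapply dab_Dmetric; eauto]
  | solve [dab_more]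
  | match goal with Hx : _ |- _ => solve [eapply Hx] end ].

Ltac sides := cbv beta; first [assumption | (apply Rgt_not_eq; assumption) | (apply Rlt_not_eq; assumption) | (intro; lra) | lra].

Ltac dall := repeat (match goal with |- context [Dp ?i (fun a b => @?E a b) ?x ?y] =>
   erewrite (Dp_val i (fun a b => E a b) x y) by (dr; sides) end).

Lemma lap_formula U f phi x y : Hyp U f -> immersion_on U f -> U x y ->
  (forall i j, Dable i (Dp j phi) x y) ->
  laplacian f phi x y = sum2 (fun i => sum2 (fun j => ginv f i j x y *
     (Dp i (Dp j phi) x y - sum2 (fun k => christ f k i j x y * Dp k phi x y)))).
Proof.
  intros H Hi Hu Hphi.
  pose proof (detg_pos U f x y Hi Hu) as Hd.
  assert (Hs: 0 < sqrt (detg f x y)) by (apply sqrt_lt_R0; auto).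
  unfold laplacian, christ, sum2, ginv. cbv beta iota. unfold detg in *.
  dall.
  rewrite !(D_metric U f _ _ _ x y H Hu).
  rewrite !(metric_sym f 1 0) in *. rewrite !(P_sym U f _ x y H Hu).
  field. split; lra.
Qed.

Arguments Dp : simpl never.

Definition W (sigma : R) (f : Surf) (i m : nat) (a b : R) : R :=
  sum2 (fun k => sum2 (fun l => ginv f k l a b * sff sigma f i k a b * Dp l (f m) a b)).

Lemma nn_pos U f a b : immersion_on U f -> U a b -> 0 < nn f a b.
Proof. intros. rewrite <- detg_nn. eapply detg_pos; eauto. Qed.

Lemma sqrt_half X : 0 < X -> sqrt X * / (2 * X) = / (2 * sqrt X).
Proof. intros. assert (0 < sqrt X) by (apply sqrt_lt_R0; auto).
  rewrite <- (sqrt_sqrt X) at 2 by lra. field. lra. Qed.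

Lemma D_normal U f sigma i m x y : Hyp U f -> immersion_on U f -> U x y -> (m < 3)%nat ->
  Dp i (fun a b => normal sigma f a b m) x y = W sigma f i m x y.
Proof.
  intros H Hi Hu Hm.
  pose proof (nn_pos U f x y Hi Hu) as Hn.
  assert (Hs: 0 < sqrt (nn f x y)) by (apply sqrt_lt_R0; auto).
  unfold W, sff, ginv, sum2. cbv beta iota. rewrite !detg_nn.
  unfold normal, nn in *. unfold metric, dot3, cross3, vat, fd, fdd in *.
  destruct m as [|[|[|m]]]; [| | |lia]; cbv beta iota;
  dall; rewrite pow2_sqrt by lra; rewrite sqrt_half by lra; field; split; lra.
Qed.

Arguments Dp : simpl never.

Lemma dab_normal U f sigma i m x y : Hyp U f -> immersion_on U f -> U x y ->
  Dable i (fun a b => normal sigma f a b m) x y.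
Proof.
  intros H Hi Hu.
  pose proof (nn_pos U f x y Hi Hu) as Hn.
  assert (Hs: 0 < sqrt (nn f x y)) by (apply sqrt_lt_R0; auto).
  unfold normal, nn in *. unfold dot3, cross3, vat, fd in *.
  destruct m as [|[|m]]; cbv beta iota; eexists; dr; sides.
Qed.

Ltac dab_more ::= first [ eapply dab_normal; eauto ].
Lemma dab_sff U f sigma i j k x y : Hyp U f -> immersion_on U f -> U x y ->
  Dable i (sff sigma f j k) x y.
Proof.
  intros H Hi Hu. eexists. unfold sff, dot3, vat, fdd.
  dr.
Qed.

Ltac dab_more ::= first [ eapply dab_normal; eauto | eapply dab_sff; eauto ].

Lemma Dsym U G i j x y : open2 U -> smooth_on U G -> U x y ->
  Dp i (Dp j G) x y = Dp j (Dp i G) x y.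
Proof.
  intros HU HG Hu. destruct i as [|i]; destruct j as [|j]; try reflexivity.
  - change (Dp 0 (Dp 1 G) x y = Dp 1 (Dp 0 G) x y). apply (Schwarz2 U); auto.
  - change (Dp 1 (Dp 0 G) x y = Dp 0 (Dp 1 G) x y). symmetry; apply (Schwarz2 U); auto.
Qed.

Lemma C3_outer U f i j k c x y : Hyp U f -> U x y -> (c < 3)%nat ->
  Dp i (Dp j (Dp k (f c))) x y = Dp j (Dp i (Dp k (f c))) x y.
Proof. intros [HU Hs] Hu Hc. apply (Dsym U); auto. apply smooth_Dp; auto. Qed.

Lemma C3_inner U f i j k c x y : Hyp U f -> U x y -> (c < 3)%nat ->
  Dp i (Dp j (Dp k (f c))) x y = Dp i (Dp k (Dp j (f c))) x y.
Proof.
  intros [HU Hs] Hu Hc. apply Dp_loc.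
  destruct (HU x y Hu) as [d [Hd E]]. exists d; split; auto. intros a b Ha Hb.
  apply (Dsym U); auto.
Qed.

Lemma B_sym U f i j c x y : Hyp U f -> U x y -> (c < 3)%nat ->
  Dp i (Dp j (f c)) x y = Dp j (Dp i (f c)) x y.
Proof. intros [HU Hs] Hu Hc. apply (Dsym U); auto. Qed.

Definition Cx (sigma : R) (f : Surf) (i j k : nat) (a b : R) : R :=
  dot3 (fun c => Dp i (Dp j (Dp k (f c))) a b) (normal sigma f a b).
Definition Q (f : Surf) (i j k m : nat) (a b : R) : R :=
  dot3 (fun c => Dp i (Dp j (Dp k (f c))) a b) (vat (fd m f) a b).
Definition BB (f : Surf) (i j k l : nat) (a b : R) : R :=
  dot3 (vat (fdd i j f) a b) (vat (fdd k l f) a b).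

Lemma C3_100 U f c x y : Hyp U f -> U x y -> (c < 3)%nat ->
  Dp 1 (Dp 0 (Dp 0 (f c))) x y = Dp 0 (Dp 0 (Dp 1 (f c))) x y.
Proof. intros. rewrite (C3_outer U); auto. rewrite (C3_inner U); auto. Qed.
Lemma C3_010 U f c x y : Hyp U f -> U x y -> (c < 3)%nat ->
  Dp 0 (Dp 1 (Dp 0 (f c))) x y = Dp 0 (Dp 0 (Dp 1 (f c))) x y.
Proof. intros. rewrite (C3_inner U); auto. Qed.
Lemma C3_110 U f c x y : Hyp U f -> U x y -> (c < 3)%nat ->
  Dp 1 (Dp 1 (Dp 0 (f c))) x y = Dp 0 (Dp 1 (Dp 1 (f c))) x y.
Proof. intros. rewrite (C3_inner U); auto. rewrite (C3_outer U); auto. Qed.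
Lemma C3_101 U f c x y : Hyp U f -> U x y -> (c < 3)%nat ->
  Dp 1 (Dp 0 (Dp 1 (f c))) x y = Dp 0 (Dp 1 (Dp 1 (f c))) x y.
Proof. intros. rewrite (C3_outer U); auto. Qed.

Ltac c3rw U H Hu := unfold dot3;
  rewrite ?(C3_100 U _ 0 _ _ H Hu), ?(C3_100 U _ 1 _ _ H Hu), ?(C3_100 U _ 2 _ _ H Hu),
          ?(C3_010 U _ 0 _ _ H Hu), ?(C3_010 U _ 1 _ _ H Hu), ?(C3_010 U _ 2 _ _ H Hu),
          ?(C3_110 U _ 0 _ _ H Hu), ?(C3_110 U _ 1 _ _ H Hu), ?(C3_110 U _ 2 _ _ H Hu),
          ?(C3_101 U _ 0 _ _ H Hu), ?(C3_101 U _ 1 _ _ H Hu), ?(C3_101 U _ 2 _ _ H Hu) by lia;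
  reflexivity.

Lemma Q_100 U f m x y : Hyp U f -> U x y -> Q f 1 0 0 m x y = Q f 0 0 1 m x y.
Proof. intros H Hu; unfold Q; c3rw U H Hu. Qed.
Lemma Q_010 U f m x y : Hyp U f -> U x y -> Q f 0 1 0 m x y = Q f 0 0 1 m x y.
Proof. intros H Hu; unfold Q; c3rw U H Hu. Qed.
Lemma Q_110 U f m x y : Hyp U f -> U x y -> Q f 1 1 0 m x y = Q f 0 1 1 m x y.
Proof. intros H Hu; unfold Q; c3rw U H Hu. Qed.
Lemma Q_101 U f m x y : Hyp U f -> U x y -> Q f 1 0 1 m x y = Q f 0 1 1 m x y.
Proof. intros H Hu; unfold Q; c3rw U H Hu. Qed.
Lemma Cx_100 U f s x y : Hyp U f -> U x y -> Cx s f 1 0 0 x y = Cx s f 0 0 1 x y.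
Proof. intros H Hu; unfold Cx; c3rw U H Hu. Qed.
Lemma Cx_010 U f s x y : Hyp U f -> U x y -> Cx s f 0 1 0 x y = Cx s f 0 0 1 x y.
Proof. intros H Hu; unfold Cx; c3rw U H Hu. Qed.
Lemma Cx_110 U f s x y : Hyp U f -> U x y -> Cx s f 1 1 0 x y = Cx s f 0 1 1 x y.
Proof. intros H Hu; unfold Cx; c3rw U H Hu. Qed.
Lemma Cx_101 U f s x y : Hyp U f -> U x y -> Cx s f 1 0 1 x y = Cx s f 0 1 1 x y.
Proof. intros H Hu; unfold Cx; c3rw U H Hu. Qed.

Lemma sff_sym U f s x y : Hyp U f -> U x y -> sff s f 1 0 x y = sff s f 0 1 x y.
Proof. intros H Hu. unfold sff, dot3, vat, fdd. rewrite !(B_sym U f 1 0 _ x y H Hu) by lia. reflexivity. Qed.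

Lemma D_sff U f sigma i j k x y : Hyp U f -> immersion_on U f -> U x y ->
  Dp i (sff sigma f j k) x y = - (Cx sigma f i j k x y +
    sum2 (fun r => sum2 (fun s => ginv f r s x y * sff sigma f i r x y * P f s j k x y))).
Proof.
  intros H Hi Hu.
  transitivity (Dp i (fun a b => - dot3 (vat (fdd j k f) a b) (normal sigma f a b)) x y);
    [reflexivity|].
  unfold dot3 at 1, vat, fdd. dall.
  rewrite !(D_normal U f sigma i _ x y H Hi Hu) by lia.
  unfold W, Cx, P, sum2, dot3, vat, fdd, fd. ring.
Qed.

Lemma dot_normal f sigma x y v :
  dot3 v (normal sigma f x y) = sigma * dot3 v (cross3 (vat (fd 0 f) x y) (vat (fd 1 f) x y)) / sqrt (nn f x y).
Proof. unfold normal, nn, dot3. field_simplify_eq. reflexivity. Abort.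

Lemma prod_sq s X Y S N : s*s=1 -> S*S = N -> S<>0 -> s*X/S*(s*Y/S) = X*Y/N.
Proof. intros H1 H2 H3. subst N. transitivity (s*s*(X*Y/(S*S))); [field; auto|]. rewrite H1. ring. Qed.

Lemma dec U f sigma x y (v w : nat -> R) : Hyp U f -> immersion_on U f -> U x y -> sigma * sigma = 1 ->
  dot3 v w = dot3 v (normal sigma f x y) * dot3 w (normal sigma f x y) +
    sum2 (fun r => sum2 (fun s => ginv f r s x y * dot3 v (vat (fd r f) x y) * dot3 w (vat (fd s f) x y))).
Proof.
  intros H Hi Hu Hs.
  pose proof (nn_pos U f x y Hi Hu) as Hn.
  assert (HS: 0 < sqrt (nn f x y)) by (apply sqrt_lt_R0; auto).
  assert (E: forall z, dot3 z (normal sigma f x y) =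
      sigma * dot3 z (cross3 (vat (fd 0 f) x y) (vat (fd 1 f) x y)) / sqrt (nn f x y)).
  { intro z. unfold normal. fold (nn f x y). set (cc := cross3 _ _). unfold dot3. field. lra. }
  rewrite !E.
  replace (sigma * dot3 v (cross3 (vat (fd 0 f) x y) (vat (fd 1 f) x y)) / sqrt (nn f x y) *
    (sigma * dot3 w (cross3 (vat (fd 0 f) x y) (vat (fd 1 f) x y)) / sqrt (nn f x y)))
   with (dot3 v (cross3 (vat (fd 0 f) x y) (vat (fd 1 f) x y)) * dot3 w (cross3 (vat (fd 0 f) x y) (vat (fd 1 f) x y)) / nn f x y).
  2:{ symmetry; apply prod_sq; auto; [apply sqrt_sqrt; lra | lra]. }
  unfold sum2, ginv. rewrite detg_nn. unfold nn in *.
  unfold metric, dot3, cross3, vat, fd in *. field. lra.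
Qed.

Arguments Dp : simpl never.

Definition e2 : nat -> R := fun c => match c with 2%nat => 1 | _ => 0 end.

Lemma BB_dec U f sigma i j k l x y : Hyp U f -> immersion_on U f -> U x y -> sigma * sigma = 1 ->
  BB f i j k l x y = sff sigma f i j x y * sff sigma f k l x y +
    sum2 (fun r => sum2 (fun s => ginv f r s x y * P f r i j x y * P f s k l x y)).
Proof. intros. unfold BB. rewrite (dec U f sigma x y); auto. unfold sff, P. ring. Qed.

Lemma B2_dec U f sigma i l x y : Hyp U f -> immersion_on U f -> U x y -> sigma * sigma = 1 ->
  Dp i (Dp l (f 2%nat)) x y = - sff sigma f i l x y * normal sigma f x y 2%nat +
    sum2 (fun r => sum2 (fun s => ginv f r s x y * P f r i l x y * Dp s (f 2%nat) x y)).
Proof.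
  intros. transitivity (dot3 (vat (fdd i l f) x y) e2); [unfold dot3, e2, vat, fdd; simpl; ring|].
  rewrite (dec U f sigma x y); auto. unfold sff, P, dot3, e2, vat, fd, sum2. simpl. ring.
Qed.

Lemma E3 U f sigma x y : Hyp U f -> immersion_on U f -> U x y -> sigma * sigma = 1 ->
  1 = normal sigma f x y 2%nat ^ 2 +
    sum2 (fun r => sum2 (fun s => ginv f r s x y * Dp r (f 2%nat) x y * Dp s (f 2%nat) x y)).
Proof.
  intros. transitivity (dot3 e2 e2); [unfold dot3, e2; simpl; ring|].
  rewrite (dec U f sigma x y); auto. unfold dot3, e2, vat, fd, sum2. simpl. ring.
Qed.

Lemma DD_metric U f i j k l x y : Hyp U f -> U x y ->
  Dp k (Dp l (metric f i j)) x y =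
  Q f k l i j x y + BB f l i k j x y + Q f k l j i x y + BB f l j k i x y.
Proof.
  intros H Hu.
  rewrite (Dp_loc k _ (fun a b => P f j l i a b + P f i l j a b)).
  2:{ destruct (Dmetric_loc U f i j l x y H Hu) as [d [Hd E]]. exists d; split; auto. }
  unfold P, dot3, vat, fd, fdd. dall. unfold Q, BB, dot3, vat, fd, fdd. ring.
Qed.

Lemma egregium U f sigma x y : Hyp U f -> immersion_on U f -> U x y -> sigma * sigma = 1 ->
  gaussK f x y = (sff sigma f 0 0 x y * sff sigma f 1 1 x y - sff sigma f 0 1 x y * sff sigma f 0 1 x y) / detg f x y.
Proof.
  intros H Hi Hu Hs.
  pose proof (detg_pos U f x y Hi Hu) as Hd.
  unfold gaussK, Riem, christ, sum2, ginv. cbv beta iota. unfold detg in *.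
  rewrite !(metric_sym f 1 0) in *.
  dall.
  rewrite !(DD_metric U f _ _ _ _ x y H Hu).
  rewrite !(D_metric U f _ _ _ x y H Hu).
  rewrite !(BB_dec U f sigma _ _ _ _ x y H Hi Hu Hs).
  unfold sum2, ginv, detg. rewrite !(metric_sym f 1 0).
  rewrite ?(Q_100 U f _ x y H Hu), ?(Q_010 U f _ x y H Hu), ?(Q_110 U f _ x y H Hu), ?(Q_101 U f _ x y H Hu).
  rewrite ?(P_sym U f _ x y H Hu), ?(sff_sym U f sigma x y H Hu).
  field. lra.
Qed.

Arguments Dp : simpl never.

Definition Asq sigma f x y := sum2 (fun i => sum2 (fun j => sum2 (fun k => sum2 (fun l =>
   ginv f i k x y * ginv f j l x y * sff sigma f i j x y * sff sigma f k l x y)))).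

Lemma codazzi U f sigma x y : Hyp U f -> immersion_on U f -> U x y -> sigma * sigma = 1 ->
  sum2 (fun i => sum2 (fun j => ginv f i j x y *
     (Dp i (W sigma f j 2) x y - sum2 (fun k => christ f k i j x y * W sigma f k 2 x y))))
  = - Asq sigma f x y * normal sigma f x y 2%nat +
    sum2 (fun i => sum2 (fun j => ginv f i j x y * Dp i (meanH sigma f) x y * Dp j (f 2%nat) x y)).
Proof.
  intros H Hi Hu Hs.
  pose proof (detg_pos U f x y Hi Hu) as Hd.
  unfold W, meanH, Asq, christ, sum2, ginv. cbv beta iota. unfold detg in *.
  rewrite !(metric_sym f 1 0) in *.
  dall.
  rewrite !(D_metric U f _ _ _ x y H Hu).
  rewrite !(D_sff U f sigma _ _ _ x y H Hi Hu).
  rewrite !(B2_dec U f sigma _ _ x y H Hi Hu Hs).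
  unfold sum2, ginv, detg. rewrite !(metric_sym f 1 0).
  rewrite ?(Cx_100 U f sigma x y H Hu), ?(Cx_010 U f sigma x y H Hu), ?(Cx_110 U f sigma x y H Hu), ?(Cx_101 U f sigma x y H Hu).
  rewrite ?(P_sym U f _ x y H Hu), ?(sff_sym U f sigma x y H Hu).
  field. lra.
Qed.

Arguments Dp : simpl never.

Lemma dab_W U f sigma i j x y : Hyp U f -> immersion_on U f -> U x y ->
  Dable i (W sigma f j 2) x y.
Proof.
  intros H Hi Hu. pose proof (detg_pos U f x y Hi Hu) as Hd.
  unfold W, sum2, ginv. unfold detg in *. eexists. dr; sides.
Qed.

Lemma sol_nbhd U f sigma x y : Hyp U f -> translating_soliton U sigma f -> U x y ->
  nbhd x y (fun a b => (fun a b => - normal sigma f a b 2%nat) a b = meanH sigma f a b).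
Proof.
  intros H Ht Hu. destruct (proj1 H x y Hu) as [d [Hd E]]. exists d; split; auto.
  intros; symmetry; apply Ht; auto.
Qed.

Lemma Der_H U f sigma i x y : Hyp U f -> immersion_on U f -> translating_soliton U sigma f -> U x y ->
  Der i (meanH sigma f) x y (- W sigma f i 2 x y).
Proof.
  intros H Hi Ht Hu. apply (Der_loc i (fun a b => - normal sigma f a b 2%nat)).
  { apply (sol_nbhd U); auto. }
  rewrite <- (D_normal U f sigma i 2 x y) by auto.
  apply Der_opp. apply Der_Dp. apply (dab_normal U); auto.
Qed.

Lemma DH U f sigma i x y : Hyp U f -> immersion_on U f -> translating_soliton U sigma f -> U x y ->
  Dp i (meanH sigma f) x y = - W sigma f i 2 x y.
Proof. intros; apply Dp_val; apply (Der_H U); auto. Qed.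

Lemma dab_H U f sigma i x y : Hyp U f -> immersion_on U f -> translating_soliton U sigma f -> U x y ->
  Dable i (meanH sigma f) x y.
Proof. intros; eexists; apply (Der_H U); eauto. Qed.

Lemma DH_nbhd U f sigma j x y : Hyp U f -> immersion_on U f -> translating_soliton U sigma f -> U x y ->
  nbhd x y (fun a b => (fun a b => - W sigma f j 2 a b) a b = Dp j (meanH sigma f) a b).
Proof.
  intros H Hi Ht Hu. destruct (proj1 H x y Hu) as [d [Hd E]]. exists d; split; auto.
  intros; symmetry; apply (DH U); auto.
Qed.

Lemma Der_DH U f sigma i j x y : Hyp U f -> immersion_on U f -> translating_soliton U sigma f -> U x y ->
  Der i (Dp j (meanH sigma f)) x y (- Dp i (W sigma f j 2) x y).
Proof.
  intros H Hi Ht Hu. apply (Der_loc i (fun a b => - W sigma f j 2 a b)).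
  { apply (DH_nbhd U); auto. }
  apply Der_opp. apply Der_Dp. apply (dab_W U); auto.
Qed.

Lemma DDH U f sigma i j x y : Hyp U f -> immersion_on U f -> translating_soliton U sigma f -> U x y ->
  Dp i (Dp j (meanH sigma f)) x y = - Dp i (W sigma f j 2) x y.
Proof. intros; apply Dp_val; apply (Der_DH U); auto. Qed.

Lemma dab_DH U f sigma i j x y : Hyp U f -> immersion_on U f -> translating_soliton U sigma f -> U x y ->
  Dable i (Dp j (meanH sigma f)) x y.
Proof. intros; eexists; apply (Der_DH U); eauto. Qed.

Lemma lapH_val U f sigma x y : Hyp U f -> immersion_on U f -> translating_soliton U sigma f -> U x y ->
  sigma * sigma = 1 ->
  laplacian f (meanH sigma f) x y = Asq sigma f x y * normal sigma f x y 2%nat +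
    sum2 (fun i => sum2 (fun j => ginv f i j x y * W sigma f i 2 x y * Dp j (f 2%nat) x y)).
Proof.
  intros H Hi Ht Hu Hs.
  rewrite (lap_formula U f); auto.
  2:{ intros; apply (dab_DH U); auto. }
  pose proof (codazzi U f sigma x y H Hi Hu Hs) as Cod.
  unfold sum2 in *.
  rewrite !(DDH U f sigma _ _ x y H Hi Ht Hu), !(DH U f sigma _ x y H Hi Ht Hu).
  rewrite !(DH U f sigma _ x y H Hi Ht Hu) in Cod. lra.
Qed.

Lemma gradH_val U f sigma x y : Hyp U f -> immersion_on U f -> translating_soliton U sigma f -> U x y ->
  gradsq f (meanH sigma f) x y =
    sum2 (fun i => sum2 (fun j => ginv f i j x y * W sigma f i 2 x y * W sigma f j 2 x y)).
Proof.
  intros H Hi Ht Hu. unfold gradsq, sum2. rewrite !(DH U f sigma _ x y H Hi Ht Hu). ring.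
Qed.

Lemma mainM U f sigma x y : Hyp U f -> immersion_on U f -> translating_soliton U sigma f -> U x y ->
  sigma * sigma = 1 ->
  gaussK f x y * (1 + meanH sigma f x y ^ 2) =
  meanH sigma f x y * laplacian f (meanH sigma f) x y - gradsq f (meanH sigma f) x y
   + meanH sigma f x y ^ 4.
Proof.
  intros H Hi Ht Hu Hs.
  pose proof (detg_pos U f x y Hi Hu) as Hd.
  pose proof (E3 U f sigma x y H Hi Hu Hs) as He.
  assert (Hz: normal sigma f x y 2%nat = - meanH sigma f x y) by (rewrite Ht; auto; ring).
  rewrite (egregium U f sigma x y H Hi Hu Hs), (lapH_val U f sigma x y H Hi Ht Hu Hs),
    (gradH_val U f sigma x y H Hi Ht Hu).
  rewrite Hz in *. rewrite He at 1.
  unfold W, Asq, meanH, sum2, ginv. unfold detg in *.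
  rewrite !(metric_sym f 1 0) in *. rewrite ?(sff_sym U f sigma x y H Hu).
  field. lra.
Qed.

Arguments Dp : simpl never.

Ltac dab_more ::= first [ eapply dab_normal; eauto | eapply dab_sff; eauto
   | eapply dab_H; eauto | eapply dab_DH; eauto ].

Lemma lap_via U f phi (G : nat -> R -> R -> R) x y : Hyp U f -> immersion_on U f -> U x y ->
  (forall j, nbhd x y (fun a b => G j a b = Dp j phi a b)) ->
  (forall i j, Dable i (G j) x y) ->
  laplacian f phi x y = sum2 (fun i => sum2 (fun j => ginv f i j x y *
     (Dp i (G j) x y - sum2 (fun k => christ f k i j x y * G k x y)))).
Proof.
  intros H Hi Hu HN HD.
  assert (E0: forall k, Dp k phi x y = G k x y).
  { intro k. destruct (HN k) as [d [Hd E]]. symmetry; apply E; rewrite rabs0; lra. }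
  assert (E1: forall i j, Dp i (Dp j phi) x y = Dp i (G j) x y).
  { intros i j. apply Dp_loc. destruct (HN j) as [d [Hd E]]; exists d; split; auto; intros; symmetry; auto. }
  rewrite (lap_formula U f); auto.
  - unfold sum2. rewrite !E0, !E1. reflexivity.
  - intros i j. destruct (HD i j) as [l Hl]. exists l. eapply Der_loc; [|exact Hl]. auto.
Qed.

Lemma U_nbhd U f x y (P : R -> R -> Prop) : Hyp U f -> U x y -> (forall a b, U a b -> P a b) -> nbhd x y P.
Proof. intros H Hu HP. destruct (proj1 H x y Hu) as [d [Hd E]]. exists d; split; auto. Qed.

Lemma lap_phi1 U f sigma x y : Hyp U f -> immersion_on U f -> translating_soliton U sigma f -> U x y ->
  laplacian f (fun a b => ln (sqrt (1 + meanH sigma f a b ^ 2))) x y =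
  meanH sigma f x y / (1 + meanH sigma f x y ^ 2) * laplacian f (meanH sigma f) x y +
  (1 - meanH sigma f x y ^ 2) / (1 + meanH sigma f x y ^ 2) ^ 2 * gradsq f (meanH sigma f) x y.
Proof.
  intros H Hi Ht Hu.
  assert (D1: forall j a b, U a b -> Dp j (fun a b => ln (sqrt (1 + meanH sigma f a b ^ 2))) a b =
      meanH sigma f a b * Dp j (meanH sigma f) a b / (1 + meanH sigma f a b ^ 2)).
  { intros j a b Hab.
    assert (P1: 0 < 1 + meanH sigma f a b ^ 2) by nra.
    assert (P2: 0 < sqrt (1 + meanH sigma f a b ^ 2)) by (apply sqrt_lt_R0; auto).
    dall. field. lra. }
  rewrite (lap_via U f _ (fun j a b => meanH sigma f a b * Dp j (meanH sigma f) a b / (1 + meanH sigma f a b ^ 2))); auto.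
  2:{ intro j. apply (U_nbhd U f); auto. intros; symmetry; apply D1; auto. }
  2:{ intros i j. eexists. assert (0 < 1 + meanH sigma f x y ^ 2) by nra. dr; sides. }
  rewrite (lap_formula U f (meanH sigma f)); auto.
  2:{ intros; eapply dab_DH; eauto. }
  assert (P1: 0 < 1 + meanH sigma f x y ^ 2) by nra.
  unfold gradsq, sum2. cbv beta. dall. field. lra.
Qed.


Arguments Dp : simpl never.
Ltac dab_more ::= first [ eapply dab_normal; eauto | eapply dab_sff; eauto
   | eapply dab_H; eauto | eapply dab_DH; eauto ].

Lemma c2c F x y : cont2_at F x y -> Continuity.continuity_2d_pt F x y.
Proof. intros C eps. destruct (C eps (cond_pos eps)) as [d [Hd E]]. exists (mkposreal d Hd). intros; apply E; auto. Qed.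

Lemma cont_atom U f i c x y : Hyp U f -> U x y -> (c < 3)%nat -> Continuity.continuity_2d_pt (Dp i (f c)) x y.
Proof. intros [_ Hs] Hu Hc. apply c2c. exact (proj1 (Hs c Hc (i :: nil) x y Hu)). Qed.

Lemma H_box U f sigma x y : Hyp U f -> immersion_on U f -> translating_soliton U sigma f -> U x y ->
  0 < meanH sigma f x y ->
  exists d, 0 < d /\ forall a b, Rabs (a - x) < d -> Rabs (b - y) < d -> U a b /\ 0 < meanH sigma f a b.
Proof.
  intros H Hi Ht Hu Hp.
  set (g := fun a b => sigma * (Dp 0 (f 0%nat) a b * Dp 1 (f 1%nat) a b - Dp 0 (f 1%nat) a b * Dp 1 (f 0%nat) a b)).
  assert (Hg: forall a b, U a b -> meanH sigma f a b = - g a b / sqrt (nn f a b)).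
  { intros a b Hab. rewrite Ht by auto. unfold normal, g. fold (nn f a b). unfold cross3, vat, fd.
    field. pose proof (nn_pos U f a b Hi Hab). assert (0 < sqrt (nn f a b)) by (apply sqrt_lt_R0; auto). lra. }
  assert (Hg0: g x y < 0).
  { pose proof (nn_pos U f x y Hi Hu). assert (0 < sqrt (nn f x y)) by (apply sqrt_lt_R0; auto).
    rewrite Hg in Hp by auto.
    destruct (Rlt_or_le (g x y) 0); auto. exfalso.
    assert (0 <= g x y * / sqrt (nn f x y)) by (apply Rmult_le_pos; [lra | left; apply Rinv_0_lt_compat; auto]).
    unfold Rdiv in *. lra. }
  assert (Cg: Continuity.continuity_2d_pt g x y).
  { unfold g. apply Continuity.continuity_2d_pt_mult. apply Continuity.continuity_2d_pt_const.
    apply Continuity.continuity_2d_pt_minus; apply Continuity.continuity_2d_pt_mult;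
    apply (cont_atom U); auto. }
  assert (He: 0 < - g x y) by lra.
  destruct (Cg (mkposreal _ He)) as [d1 E1].
  destruct (proj1 H x y Hu) as [d2 [Hd2 E2]].
  exists (Rmin d1 d2). split. { apply Rmin_pos; [apply cond_pos| lra]. }
  intros a b Ha Hb.
  assert (Hab: U a b) by (apply E2; eapply Rlt_le_trans; eauto; apply Rmin_r).
  split; auto.
  assert (Hga: g a b < 0).
  { assert (Rabs (g a b - g x y) < - g x y).
    { apply (E1 a b); eapply Rlt_le_trans; eauto; apply Rmin_l. }
    apply Rabs_def2 in H0. lra. }
  rewrite Hg by auto.
  pose proof (nn_pos U f a b Hi Hab). assert (0 < sqrt (nn f a b)) by (apply sqrt_lt_R0; auto).
  unfold Rdiv. apply Rmult_lt_0_compat; [lra| apply Rinv_0_lt_compat; auto].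
Qed.

Lemma box_nbhd x y d (P : R -> R -> Prop) : 0 < d ->
  (forall a b, Rabs (a - x) < d -> Rabs (b - y) < d -> P a b) -> nbhd x y P.
Proof. intros; exists d; split; auto. Qed.

Lemma lap_phi4 U f sigma x y : Hyp U f -> immersion_on U f -> translating_soliton U sigma f -> U x y ->
  0 < meanH sigma f x y ->
  laplacian f (fun a b => ln (meanH sigma f a b)) x y =
  laplacian f (meanH sigma f) x y / meanH sigma f x y - gradsq f (meanH sigma f) x y / meanH sigma f x y ^ 2.
Proof.
  intros H Hi Ht Hu Hp.
  destruct (H_box U f sigma x y H Hi Ht Hu Hp) as [d [Hd Hb]].
  rewrite (lap_via U f _ (fun j a b => Dp j (meanH sigma f) a b / meanH sigma f a b)); auto.
  2:{ intro j. apply (box_nbhd x y d); auto. intros a b Ha Hb'.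
      destruct (Hb a b Ha Hb') as [Hab Hpos]. cbv beta. symmetry. dall. field. lra. }
  2:{ intros i j. eexists. dr; sides. }
  rewrite (lap_formula U f (meanH sigma f)); auto.
  2:{ intros; eapply dab_DH; eauto. }
  unfold gradsq, sum2. cbv beta. dall. field. lra.
Qed.

Lemma lap_u U f sigma x y : Hyp U f -> immersion_on U f -> U x y -> sigma * sigma = 1 ->
  laplacian f (f 2%nat) x y = - meanH sigma f x y * normal sigma f x y 2%nat.
Proof.
  intros H Hi Hu Hs.
  pose proof (detg_pos U f x y Hi Hu) as Hd.
  rewrite (lap_formula U f); auto.
  2:{ intros; eapply dab1; eauto. }
  unfold sum2. rewrite !(B2_dec U f sigma _ _ x y H Hi Hu Hs).
  unfold meanH, christ, sum2, ginv. cbv beta iota.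
  rewrite !(D_metric U f _ _ _ x y H Hu).
  unfold detg in *. rewrite !(metric_sym f 1 0) in *.
  rewrite ?(P_sym U f _ x y H Hu), ?(sff_sym U f sigma x y H Hu).
  field. lra.
Qed.

Lemma lap_phi3 U f sigma x y : Hyp U f -> immersion_on U f -> translating_soliton U sigma f -> U x y ->
  0 < meanH sigma f x y ->
  laplacian f (fun a b => ln (exp (f 2%nat a b) * meanH sigma f a b)) x y =
  laplacian f (f 2%nat) x y +
  (laplacian f (meanH sigma f) x y / meanH sigma f x y - gradsq f (meanH sigma f) x y / meanH sigma f x y ^ 2).
Proof.
  intros H Hi Ht Hu Hp.
  destruct (H_box U f sigma x y H Hi Ht Hu Hp) as [d [Hd Hb]].
  rewrite (lap_via U f _ (fun j a b => Dp j (f 2%nat) a b + Dp j (meanH sigma f) a b / meanH sigma f a b)); auto.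
  2:{ intro j. apply (box_nbhd x y d); auto. intros a b Ha Hb'.
      destruct (Hb a b Ha Hb') as [Hab Hpos]. cbv beta. symmetry.
      assert (Hex: 0 < exp (f 2%nat a b)) by apply exp_pos.
      assert (0 < exp (f 2%nat a b) * meanH sigma f a b) by (apply Rmult_lt_0_compat; auto).
      dall. field. lra. }
  2:{ intros i j. eexists. dr; sides. }
  rewrite (lap_formula U f (meanH sigma f)); auto.
  2:{ intros; eapply dab_DH; eauto. }
  rewrite (lap_formula U f (f 2%nat)); auto.
  2:{ intros; eapply dab1; eauto. }
  unfold gradsq, sum2. cbv beta. dall. field. lra.
Qed.

Theorem lemma4p5 (U : R -> R -> Prop) (f : Surf) (sigma : R) :
  open2 U ->
  (forall k, (k < 3)%nat -> smooth_on U (f k)) ->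
  immersion_on U f ->
  (sigma = 1 \/ sigma = -1) ->
  translating_soliton U sigma f ->
  forall x y, U x y ->
  let H := meanH sigma f in
  let K := gaussK f x y in
  let u := f 2%nat in
  K = laplacian f (fun a b => ln (sqrt (1 + H a b ^ 2))) x y
      - 2 / (1 + H x y ^ 2) ^ 2 * gradsq f H x y
      + H x y ^ 4 / (1 + H x y ^ 2) /\
  K = H x y / (1 + H x y ^ 2) * laplacian f H x y
      - gradsq f H x y / (1 + H x y ^ 2)
      + H x y ^ 4 / (1 + H x y ^ 2) /\
  (0 < H x y ->
     K = H x y ^ 2 / (1 + H x y ^ 2) *
           laplacian f (fun a b => ln (exp (u a b) * H a b)) x y /\
     K = H x y ^ 2 / (1 + H x y ^ 2) *
           (laplacian f (fun a b => ln (H a b)) x y + H x y ^ 2)).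
Proof.
  intros HU Hs Hi Hsig Ht x y Hu H K u.
  assert (Hy: Hyp U f) by (split; auto).
  assert (Hss: sigma * sigma = 1) by (destruct Hsig; subst; ring).
  pose proof (mainM U f sigma x y Hy Hi Ht Hu Hss) as M.
  subst H K u. cbv zeta.
  set (h := meanH sigma f x y) in *.
  set (LH := laplacian f (meanH sigma f) x y) in *.
  set (G := gradsq f (meanH sigma f) x y) in *.
  set (K := gaussK f x y) in *.
  assert (P1: 0 < 1 + h ^ 2) by nra.
  assert (MK: K = (h * LH - G + h ^ 4) / (1 + h ^ 2)).
  { rewrite <- M. field. lra. }
  split; [|split].
  - rewrite (lap_phi1 U f sigma x y Hy Hi Ht Hu). fold h LH G. rewrite MK. field. lra.
  - rewrite MK. field. lra.
  - intro Hp. split.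
    + rewrite (lap_phi3 U f sigma x y Hy Hi Ht Hu Hp). fold h LH G.
      rewrite (lap_u U f sigma x y Hy Hi Hu Hss). fold h.
      assert (Hz: normal sigma f x y 2%nat = - h) by (unfold h; rewrite Ht; auto; ring).
      rewrite Hz, MK. field. lra.
    + rewrite (lap_phi4 U f sigma x y Hy Hi Ht Hu Hp). fold h LH G.
      rewrite MK. field. lra.
Qed.
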